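(* Let $n$ range over odd square-free integers greater than $1$, let $r$ be real, and let $V$ be drawn uniformly at random from $\mathcal{V}_n$. Then, as $n\to\infty$, \[ \Pr\Big(\|V_r\|_4^4<288\,[\psi(n)]^2\log n\Big)\to 1, \] where $\psi(n)=n-\phi(n)$.
   Context: $\phi$ is Euler's totient function. For $A\in\mathbb{C}[z]$, $\|A\|_4=\left(\frac{1}{2\pi}\int_0^{2\pi}|A(e^{i\theta})|^4 d\theta\right)^{1/4}$. For a polynomial $A$ of degree at most $n-1$ and real $r$, the rotation is $A_r(z)=z^{-\lfloor nr\rfloor}A(z)\bmod (z^n-1)$. $\mathcal{V}_n$ is the set of polynomials $\sum_{j=0}^{n-1}v_jz^j$ with $v_j\in\{0,-1,+1\}$ and $v_j=0$ if and only if $\gcd(j,n)=1$. *)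

(* Defs.v *)
From HB Require Import structures.
From mathcomp Require Import all_boot all_order all_algebra.
From mathcomp Require Import all_classical all_reals all_analysis.
Set Implicit Arguments. Unset Strict Implicit. Unset Printing Implicit Defensive.
Import Order.TTheory GRing.Theory Num.Theory.
Import numFieldNormedType.Exports.
Local Open Scope ring_scope.

Definition squarefree (n : nat) : bool :=
  [forall p : 'I_n.+1, prime p ==> ~~ (p * p %| n)%N].

Definition psi (n : nat) : nat := (n - totient n)%N.

Definition coef3 (R : pzRingType) (c : 'I_3) : R :=
  if val c == 0%N then 0 else if val c == 1%N then 1 else -1.

(* V_n : coefficient vectors v_0..v_{n-1} in {0,-1,1}, v_j = 0 iff gcd(j,n)=1 *)
Definition Vset (n : nat) : {set {ffun 'I_n -> 'I_3}} :=
  [set v : {ffun 'I_n -> 'I_3} | [forall j : 'I_n, (val (v j) == 0%N) == coprime j n]].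

(* coefficients of the rotation A_r(z) = z^{-floor(nr)} A(z) mod (z^n - 1):
   the coefficient of z^j is a_{(j + floor(n r)) mod n}. *)
Definition rotc (R : realType) (n : nat) (r : R) (a : 'I_n -> R) (j : 'I_n) : R :=
  let k := ((j%:Z + Num.floor (n%:R * r)) %% n%:Z)%Z in
  match k with
  | Posz m => (if (m < n)%N as b return (m < n)%N = b -> R then
                 fun H => a (Ordinal H) else fun _ => 0) erefl
  | Negz _ => 0
  end.

(* |A(e^{i theta})|^2 for a real-coefficient polynomial sum_j a_j z^j *)
Definition absA2 (R : realType) (n : nat) (a : 'I_n -> R) (t : R) : R :=
  (\sum_(j < n) a j * cos (j%:R * t)) ^+ 2 + (\sum_(j < n) a j * sin (j%:R * t)) ^+ 2.

Definition L4pow4 (R : realType) (n : nat) (a : 'I_n -> R) : R :=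
  (2 * pi)^-1 * \int[lebesgue_measure]_(t in `[0, 2 * pi]%classic) (absA2 a t ^+ 2).

Definition prob_event (R : realType) (n : nat) (r : R) : R :=
  #|[set v in Vset n |
      L4pow4 (rotc r (fun j => coef3 R (v j))) < 288 * (psi n)%:R ^+ 2 * ln (n%:R)]|%:R
  / #|Vset n|%:R.

(* Main.v *)
Require Import Defs.
From HB Require Import structures.
From mathcomp Require Import all_boot all_order all_algebra.
From mathcomp Require Import all_classical all_reals all_analysis.
From mathcomp Require Import ring lra.
Import Order.TTheory GRing.Theory Num.Theory.
Import numFieldNormedType.Exports.
Local Open Scope ring_scope.

Definition flip3 (x : 'I_3) : 'I_3 :=
  if val x == 0%N then x else if val x == 1%N then inord 2 else inord 1.

Lemma flip3K : involutive flip3.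
Proof. by case=> [[|[|[|m]]] Hm] //=; rewrite /flip3 /= ?inordK //=; apply: val_inj; rewrite /= ?inordK. Qed.

Lemma coef3_flip (R : pzRingType) x : coef3 R (flip3 x) = - coef3 R x.
Proof. by case: x => [[|[|[|m]]] Hm] //=; rewrite /flip3 /coef3 /= ?inordK //= ?oppr0 ?opprK. Qed.

Lemma flip3_eq0 x : (val (flip3 x) == 0%N) = (val x == 0%N).
Proof. by case: x => [[|[|[|m]]] Hm] //=; rewrite /flip3 /= ?inordK. Qed.

Definition flipv n (k : 'I_n) (v : {ffun 'I_n -> 'I_3}) : {ffun 'I_n -> 'I_3} :=
  [ffun i => if i == k then flip3 (v i) else v i].
Arguments flipv {n} k v.

Lemma flipvK n k : involutive (@flipv n k).
Proof.
move=> v; apply/ffunP => i; rewrite !ffunE; case: eqP => // _; exact: flip3K.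
Qed.

Lemma flipv_in n k v : (flipv k v \in Vset n) = (v \in Vset n).
Proof.
rewrite !inE; apply: eq_forallb => i; rewrite ffunE; case: (i == k) => //.
by rewrite flip3_eq0.
Qed.

Lemma coef3_cop (R : pzRingType) n v (k : 'I_n) : v \in Vset n -> coprime k n -> coef3 R (v k) = 0.
Proof.
rewrite inE => /forallP /(_ k) /eqP; rewrite /coef3 => -> ->; by [].
Qed.

Lemma coef3_ncop (R : pzRingType) n v (k : 'I_n) : v \in Vset n -> ~~ coprime k n -> coef3 R (v k) ^+ 2 = 1.
Proof.
rewrite inE => /forallP /(_ k) H Hk.
have H0 : (val (v k) == 0%N) = false by apply/negbTE; move: H; rewrite (negbTE Hk) eqbF_neg.
rewrite /coef3 H0.
case: eqP => _; first by rewrite expr1n.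
by rewrite sqrrN expr1n.
Qed.

Arguments coef3_cop R {n v k}.
Arguments coef3_ncop R {n v k}.

Lemma sum_odd0 (R : realDomainType) n (k : 'I_n) (h : {ffun 'I_n -> 'I_3} -> R) :
  (forall v, h (flipv k v) = h v) ->
  \sum_(v in Vset n) coef3 R (v k) * h v = 0.
Proof.
move=> hf.
have E : \sum_(v in Vset n) coef3 R (v k) * h v = - \sum_(v in Vset n) coef3 R (v k) * h v.
  rewrite [LHS](reindex_inj (can_inj (@flipvK n k))) /= -sumrN.
  apply: eq_big => v; first by rewrite flipv_in.
  by move=> _; rewrite hf ffunE eqxx coef3_flip mulNr.
move: E; set S := \sum_(v in Vset n) _; lra.
Qed.

Definition Ys (R : realDomainType) n (sg : 'I_n -> 'I_n) (c : 'I_n -> R) (s : seq 'I_n)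
  (v : {ffun 'I_n -> 'I_3}) : R := \sum_(j <- s) coef3 R (v (sg j)) * c j.
Definition As (R : realDomainType) n (sg : 'I_n -> 'I_n) (c : 'I_n -> R) (s : seq 'I_n) : R :=
  \sum_(j <- s | ~~ coprime (sg j) n) c j ^+ 2.
Arguments Ys {R n} sg c s v.
Arguments As {R n} sg c s.

Lemma As_ge0 (R : realDomainType) n sg (c : 'I_n -> R) s : 0 <= As sg c s.
Proof. by apply: sumr_ge0 => i _; rewrite sqr_ge0. Qed.

Lemma moments (R : realDomainType) n (sg : 'I_n -> 'I_n) (sginj : injective sg)
  (c : 'I_n -> R) (s : seq 'I_n) : uniq s ->
  \sum_(v in Vset n) Ys sg c s v ^+ 2 <= #|Vset n|%:R * As sg c s /\
  \sum_(v in Vset n) Ys sg c s v ^+ 4 <= 3 * #|Vset n|%:R * As sg c s ^+ 2.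
Proof.
elim: s => [|j s IH] /=.
  move=> _; rewrite /Ys /As !big_nil mulr0 expr0n /= mulr0.
  by rewrite !big1 // => v _; rewrite big_nil expr0n.
move=> /andP [js us]; have [IH2 IH4] := IH us.
have Yc v : Ys sg c (j :: s) v = coef3 R (v (sg j)) * c j + Ys sg c s v.
  by rewrite /Ys big_cons.
have Yf v : Ys sg c s (flipv (sg j) v) = Ys sg c s v.
  rewrite /Ys; apply: eq_big_seq => i iis; rewrite ffunE.
  have -> : (sg i == sg j) = false.
    apply/negbTE; rewrite (inj_eq sginj); apply: contraNneq js => <-; exact: iis.
  by [].
have KA := @As_ge0 R n sg c s.
have K0 : (0 : R) <= #|Vset n|%:R by [].
case: (boolP (coprime (sg j) n)) => Hc.
  have -> : As sg c (j :: s) = As sg c s by rewrite /As big_cons Hc.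
  have E p : \sum_(v in Vset n) Ys sg c (j :: s) v ^+ p = \sum_(v in Vset n) Ys sg c s v ^+ p.
    by apply: eq_bigr => v Hv; rewrite Yc (coef3_cop R Hv Hc) mul0r add0r.
  by rewrite !E.
have -> : As sg c (j :: s) = c j ^+ 2 + As sg c s by rewrite /As big_cons Hc.
set x := c j ^+ 2.
have x0 : 0 <= x by rewrite sqr_ge0.
set K := (#|Vset n|%:R : R).
have Z1 : \sum_(v in Vset n) coef3 R (v (sg j)) * Ys sg c s v = 0.
  by apply: (@sum_odd0 R n (sg j) (fun v => Ys sg c s v)) => v; rewrite Yf.
have Z3 : \sum_(v in Vset n) coef3 R (v (sg j)) * Ys sg c s v ^+ 3 = 0.
  by apply: (@sum_odd0 R n (sg j) (fun v => Ys sg c s v ^+ 3)) => v; rewrite Yf.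
have C1 : \sum_(v in Vset n) (1 : R) = K by rewrite sumr_const.
split.
  have -> : \sum_(v in Vset n) Ys sg c (j :: s) v ^+ 2 =
     \sum_(v in Vset n) (x * 1 + Ys sg c s v ^+ 2 + 2 * c j * (coef3 R (v (sg j)) * Ys sg c s v)).
    apply: eq_bigr => v Hv; rewrite Yc.
    have e2 := coef3_ncop R Hv Hc.
    set e := coef3 R _ in e2 *; set y := Ys _ _ _ _.
    have -> : (e * c j + y) ^+ 2 = e ^+ 2 * x + y ^+ 2 + 2 * c j * (e * y) by rewrite /x; ring.
    by rewrite e2 mul1r mulr1.
  rewrite !big_split /= -!mulr_sumr Z1 C1 mulr0 addr0.
  set S2 := \sum_(v in Vset n) _ in IH2 *.
  lra.
have -> : \sum_(v in Vset n) Ys sg c (j :: s) v ^+ 4 =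
   \sum_(v in Vset n) (x ^+ 2 * 1 + 6 * x * Ys sg c s v ^+ 2 + Ys sg c s v ^+ 4
       + 4 * c j * x * (coef3 R (v (sg j)) * Ys sg c s v)
       + 4 * c j * (coef3 R (v (sg j)) * Ys sg c s v ^+ 3)).
  apply: eq_bigr => v Hv; rewrite Yc.
  have e2 := coef3_ncop R Hv Hc.
  set e := coef3 R _ in e2 *; set y := Ys _ _ _ _.
  have -> : (e * c j + y) ^+ 4 = (e ^+ 2) ^+ 2 * x ^+ 2 + 6 * (e ^+ 2) * x * y ^+ 2 + y ^+ 4
       + 4 * c j * x * (e ^+ 2) * (e * y) + 4 * c j * (e * y ^+ 3) by rewrite /x; ring.
  rewrite e2; ring.
rewrite !big_split /= -!mulr_sumr Z1 Z3 C1 !mulr0 !addr0.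
set S2 := \sum_(v in Vset n) _ in IH2 *.
set S4 := \sum_(v in Vset n) _ in IH4 *.
set A := As sg c s in IH2 IH4 KA *.
have h1 : 0 <= K * x ^+ 2 by apply: mulr_ge0 => //; rewrite sqr_ge0.
have h2 : 0 <= x * (K * A - S2) by apply: mulr_ge0 => //; lra.
have h3 : 0 <= K * x * A by rewrite mulr_ge0 // mulr_ge0.
have -> : 3 * K * (x + A) ^+ 2 = 3 * (K * x ^+ 2) + 6 * (K * x * A) + 3 * K * A ^+ 2 by ring.
have -> : 6 * x * S2 = 6 * (x * K * A) - 6 * (x * (K * A - S2)) by ring.
have -> : x * K * A = K * x * A by ring.
lra.
Qed.

Lemma sig_lt n (f : int) (j : 'I_n) : (`|((j%:Z + f) %% n%:Z)%Z|%N < n)%N.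
Proof.
have n0 : (0 < n)%N := leq_ltn_trans (leq0n _) (ltn_ord j).
rewrite -ltz_nat gez0_abs ?modz_ge0 ?ltz_pmod //; by rewrite ?ltz_nat ?eqz_nat -?lt0n.
Qed.

Arguments sig_lt {n}.
Definition sig n (f : int) (j : 'I_n) : 'I_n := Ordinal (sig_lt f j).

Arguments sig {n}.
Lemma sig_inj n f : injective (@sig n f).
Proof.
move=> j1 j2 /(congr1 val) /= E.
have n0 : (0 < n)%N := leq_ltn_trans (leq0n _) (ltn_ord j1).
have E' : ((j1%:Z + f) %% n%:Z)%Z = ((j2%:Z + f) %% n%:Z)%Z.
  by rewrite -(gez0_abs (modz_ge0 _ _)) ?E ?gez0_abs ?modz_ge0 // eqz_nat -lt0n.
have K (j : 'I_n) : j%:Z = ((((j%:Z + f) %% n%:Z)%Z - f) %% n%:Z)%Z.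
  by rewrite modzDml addrK modz_small // ltz_nat ltn_ord.
apply: val_inj => /=; apply/eqP; rewrite -eqz_nat; apply/eqP.
by rewrite (K j1) (K j2) E'.
Qed.

Lemma rotc_sig (R : realType) n (r : R) (a : 'I_n -> R) (j : 'I_n) :
  rotc r a j = a (sig (Num.floor (n%:R * r)) j).
Proof.
rewrite /rotc.
have := sig_lt (Num.floor (n%:R * r)) j.
have n0 : (0 < n)%N := leq_ltn_trans (leq0n _) (ltn_ord j).
have ge : (0 <= ((j%:Z + Num.floor (n%:R * r)) %% n%:Z)%Z)%R.
  by rewrite modz_ge0 // eqz_nat -lt0n.
rewrite /sig.
move: (sig_lt _ _).
case E: ((j%:Z + Num.floor (n%:R * r)) %% n%:Z)%Z ge => [m|m] //= _ H1 H2.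
suff HH : forall b (e : (m < n)%N = b),
  (if b as b0 return ((m < n)%N = b0 -> R) then fun H => a (Ordinal H) else fun _ => 0) e
   = a (Ordinal H1).
  exact: HH.
move=> b e; case: b e => e; first by congr a; apply: val_inj.
by rewrite H2 in e.
Qed.

Lemma card_ncop n (sg : 'I_n -> 'I_n) (sginj : injective sg) :
  #|[set j : 'I_n | ~~ coprime (sg j) n]| = psi n.
Proof.
set C := [set k : 'I_n | coprime k n].
have -> : [set j : 'I_n | ~~ coprime (sg j) n] = ~: (sg @^-1: C).
  by apply/setP => j; rewrite !inE.
have := cardsC (sg @^-1: C); rewrite card_preimset // => E.
have E2 : #|~: (sg @^-1: C)| = (n - #|C|)%N by move: E; rewrite card_ord; move: #|~: _| #|C| => a b <-; rewrite addKn.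
rewrite E2 /psi.
suff -> : totient n = #|C| by [].
rewrite totient_count_coprime big_mkord -sum1dep_card big_mkcond /=.
rewrite [RHS]big_mkcond /=; apply: eq_bigr => d _; rewrite coprime_sym; by case: coprime.
Qed.

Lemma ptwise (R : realType) n (sg : 'I_n -> 'I_n) (sginj : injective sg) (t : R) :
  \sum_(v in Vset n) absA2 (fun j => coef3 R (v (sg j))) t ^+ 2
    <= 6 * #|Vset n|%:R * (psi n)%:R ^+ 2.
Proof.
set s := index_enum 'I_n.
have us : uniq s by apply: index_enum_uniq.
have [_ C4] := @moments R n sg sginj (fun j : 'I_n => cos (j%:R * t)) s us.
have [_ S4] := @moments R n sg sginj (fun j : 'I_n => sin (j%:R * t)) s us.
have AC := @As_ge0 R n sg (fun j : 'I_n => cos (j%:R * t)) s.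
have AS := @As_ge0 R n sg (fun j : 'I_n => sin (j%:R * t)) s.
have Hsum : As sg (fun j : 'I_n => cos (j%:R * t)) s + As sg (fun j : 'I_n => sin (j%:R * t)) s
   = (psi n)%:R.
  rewrite /As -big_split /=.
  rewrite (eq_bigr (fun _ => 1)); last by move=> i _; rewrite cos2Dsin2.
  by rewrite -(@card_ncop n sg sginj) -sum1dep_card natr_sum.
have -> : \sum_(v in Vset n) absA2 (fun j => coef3 R (v (sg j))) t ^+ 2 =
   \sum_(v in Vset n) (Ys sg (fun j : 'I_n => cos (j%:R * t)) s v ^+ 2 +
                       Ys sg (fun j : 'I_n => sin (j%:R * t)) s v ^+ 2) ^+ 2 by [].
apply: (le_trans (y := \sum_(v in Vset n) (2 * Ys sg (fun j : 'I_n => cos (j%:R * t)) s v ^+ 4 +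
                       2 * Ys sg (fun j : 'I_n => sin (j%:R * t)) s v ^+ 4))).
  apply: ler_sum => v _.
  set a := Ys _ _ _ v; set b := Ys _ _ _ v.
  have h : 0 <= (a ^+ 2 - b ^+ 2) ^+ 2 by rewrite sqr_ge0.
  have -> : 2 * a ^+ 4 + 2 * b ^+ 4 = (a ^+ 2 + b ^+ 2) ^+ 2 + (a ^+ 2 - b ^+ 2) ^+ 2 by ring.
  lra.
rewrite big_split /= -!mulr_sumr.
move: C4 S4 Hsum AC AS.
set x := As _ _ _; set y := As _ _ _.
set K := (#|Vset n|%:R : R).
set P := ((psi n)%:R : R).
move=> C4 S4 Hsum AC AS.
have K0 : 0 <= K by [].
have h : 0 <= K * (x * y) by rewrite mulr_ge0 // mulr_ge0.
have -> : 6 * K * P ^+ 2 = 6 * (K * x ^+ 2) + 6 * (K * y ^+ 2) + 12 * (K * (x * y)).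
  by rewrite -Hsum; ring.
have e1 : 3 * K * x ^+ 2 = 3 * (K * x ^+ 2) by ring.
have e2 : 3 * K * y ^+ 2 = 3 * (K * y ^+ 2) by ring.
lra.
Qed.

Lemma cont_sum (R : realType) (I : Type) (s : seq I) (P : pred I) (F : I -> R -> R) :
  (forall i, continuous (F i)) -> continuous (fun t => \sum_(i <- s | P i) F i t).
Proof.
move=> HF; elim: s => [|i s IH].
  have -> : (fun t : R => \sum_(i <- [::] | P i) F i t) = cst 0.
    by apply/funext => t; rewrite big_nil.
  exact: cst_continuous.
case Pi: (P i).
  have -> : (fun t : R => \sum_(j <- i :: s | P j) F j t) =
     (F i) + (fun t => \sum_(j <- s | P j) F j t).
    by apply/funext => t; rewrite big_cons Pi.
  move=> x; apply: continuousD; [exact: HF | exact: IH].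
have -> : (fun t : R => \sum_(j <- i :: s | P j) F j t) = (fun t => \sum_(j <- s | P j) F j t).
  by apply/funext => t; rewrite big_cons Pi.
exact: IH.
Qed.

Lemma cont_absA2 (R : realType) n (a : 'I_n -> R) : continuous (fun t => absA2 a t ^+ 2).
Proof.
have cc (g : R -> R) (c : R) : continuous g -> continuous (fun t => c * g t).
  move=> hg x; apply: continuousM; [exact: cst_continuous | exact: hg].
have ct (g : R -> R) (c : R) : continuous g -> continuous (fun t => g (c * t)).
  move=> hg x; apply: continuous_comp; [exact: mulrl_continuous | exact: hg].
have hsq (g : R -> R) : continuous g -> continuous (fun t => g t ^+ 2).
  move=> hg x; rewrite /=.
  have -> : (fun t => g t ^+ 2) = g \* g by apply/funext => t; rewrite expr2.
  by apply: continuousM; apply: hg.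
have cD (f g : R -> R) : continuous f -> continuous g -> continuous (fun t => f t + g t).
  move=> hf hg x; exact: (@continuousD _ _ _ f g x (hf x) (hg x)).
apply: (hsq); rewrite /absA2.
apply: cD; apply: (hsq).
  apply: (@cont_sum R 'I_n _ _ (fun (j : 'I_n) t => a j * cos (j%:R * t))) => j.
  by apply: (cc); apply: (ct); apply: continuous_cos.
apply: (@cont_sum R 'I_n _ _ (fun (j : 'I_n) t => a j * sin (j%:R * t))) => j.
by apply: (cc); apply: (ct); apply: continuous_sin.
Qed.

Lemma int_cont (R : realType) (a b : R) (f : R -> R) : continuous f ->
  (@lebesgue_measure R).-integrable `[a, b]%classic (EFin \o f).
Proof.
move=> hf; apply: continuous_compact_integrable; first exact: segment_compact.
exact: continuous_subspaceT.
Qed.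

Lemma Rint_sum (R : realType) (a b : R) (I : Type) (s : seq I) (P : pred I) (F : I -> R -> R) :
  (forall i, continuous (F i)) ->
  \sum_(i <- s | P i) \int[@lebesgue_measure R]_(t in `[a, b]%classic) F i t =
  \int[@lebesgue_measure R]_(t in `[a, b]%classic) (\sum_(i <- s | P i) F i t).
Proof.
move=> HF; elim: s => [|i s IH].
  rewrite big_nil.
  have -> : (fun t : R => \sum_(i <- [::] | P i) F i t) = (fun=> 0).
    by apply/funext => t; rewrite big_nil.
  by rewrite Rintegral_cst ?mul0r //; exact: measurable_itv.
rewrite big_cons; case Pi: (P i).
  have -> : (fun t : R => \sum_(j <- i :: s | P j) F j t) =
     (fun t => F i t + \sum_(j <- s | P j) F j t).
    by apply/funext => t; rewrite big_cons Pi.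
  rewrite RintegralD; [by rewrite IH | exact: measurable_itv | exact: int_cont |].
  by apply: int_cont; apply: cont_sum.
have -> : (fun t : R => \sum_(j <- i :: s | P j) F j t) = (fun t => \sum_(j <- s | P j) F j t).
  by apply/funext => t; rewrite big_cons Pi.
exact: IH.
Qed.

Lemma muD (R : realType) : fine (@lebesgue_measure R `[0, 2 * pi]%classic) = 2 * pi.
Proof.
rewrite lebesgue_measure_itv /=.
have hp : (0 : R) < 2 * pi by rewrite mulr_gt0 // pi_gt0.
by rewrite lte_fin hp /= subr0.
Qed.

Lemma sumL_bound (R : realType) (r : R) n :
  \sum_(v in Vset n) L4pow4 (rotc r (fun j => coef3 R (v j)))
    <= 6 * #|Vset n|%:R * (psi n)%:R ^+ 2.
Proof.
set sg := @sig n (Num.floor (n%:R * r)).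
have sginj : injective sg := @sig_inj n _.
have Erot v : rotc r (fun j => coef3 R (v j)) = (fun j => coef3 R (v (sg j))).
  by apply/funext => j; rewrite rotc_sig.
under eq_bigr => v _ do rewrite Erot.
rewrite /L4pow4 -mulr_sumr.
rewrite (@Rint_sum R 0 (2 * pi) _ _ _ (fun (v : {ffun 'I_n -> 'I_3}) t => absA2 (fun j => coef3 R (v (sg j))) t ^+ 2)); last first.
  by move=> v; apply: cont_absA2.
have hp : (0 : R) < 2 * pi by rewrite mulr_gt0 // pi_gt0.
set M := 6 * _ * _.
apply: (le_trans (y := (2 * pi)^-1 * \int[lebesgue_measure]_(t in `[0, 2 * pi]%classic) M)).
  rewrite ler_pM2l ?invr_gt0 //.
  apply: le_Rintegral.
  - exact: measurable_itv.
  - by apply: int_cont; apply: cont_sum => v; apply: cont_absA2.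
  - by apply: int_cont; apply: cst_continuous.
  - by move=> t _; apply: ptwise.
rewrite Rintegral_cst; last exact: measurable_itv.
rewrite muD mulrC -mulrA mulrV ?mulr1 //; by rewrite unitfE gt_eqF.
Qed.

Lemma psi_gt0 n : (1 < n)%N -> (0 < psi n)%N.
Proof.
move=> n1; rewrite -(@card_ncop n id (@inj_id _)) card_gt0.
have n0 : (0 < n)%N by apply: ltn_trans n1.
apply/set0Pn; exists (Ordinal n0); rewrite inE /coprime gcd0n /=.
by rewrite neq_ltn n1 orbT.
Qed.

Lemma Vset_gt0 n : (0 < #|Vset n|)%N.
Proof.
rewrite card_gt0; apply/set0Pn.
exists [ffun j : 'I_n => if coprime j n then (ord0 : 'I_3) else inord 1].
rewrite inE; apply/forallP => j; rewrite ffunE.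
by case: (coprime j n); rewrite //= inordK.
Qed.

Theorem lemma15 (R : realType) (r : R) :
  forall eps : R, 0 < eps ->
  exists N : nat, forall n : nat, (N <= n)%N -> (1 < n)%N -> odd n -> squarefree n ->
    1 - eps < prob_event n r.
Proof.
move=> eps eps0.
exists (Num.trunc (expR eps^-1)).+1 => n Nn n1 _ _.
set L := fun v : {ffun 'I_n -> 'I_3} => L4pow4 (rotc r (fun j => coef3 R (v j))).
set K := (#|Vset n|%:R : R).
set P := ((psi n)%:R : R).
set T := 288 * P ^+ 2 * ln (n%:R : R).
have K0 : 0 < K by rewrite ltr0n Vset_gt0.
have P0 : 0 < P by rewrite ltr0n psi_gt0.
have Ln : eps^-1 < ln (n%:R : R).
  have h1 := truncnS_gt (expR eps^-1).
  have h2 : ((Num.trunc (expR eps^-1)).+1%:R : R) <= n%:R by rewrite ler_nat.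
  rewrite -[X in X < _]expRK ltr_ln ?posrE ?expR_gt0 //; first lra.
  by rewrite ltr0n; apply: ltn_trans n1.
have L0 : 0 < ln (n%:R : R) by apply: lt_trans Ln; rewrite invr_gt0.
have Lge v : 0 <= L v.
  rewrite /L /L4pow4 mulr_ge0 //; first by rewrite invr_ge0 mulr_ge0 // pi_ge0.
  by apply: Rintegral_ge0 => t _; rewrite sqr_ge0.
set G := [set v in Vset n | L v < T].
have -> : prob_event n r = #|G|%:R / K by [].
set B := Vset n :\: G.
have HGB : (#|G| + #|B| = #|Vset n|)%N.
  have VG : Vset n :&: G = G.
    by rewrite /G setIdE finset.setIA finset.setIid.
  by rewrite -(cardsID G (Vset n)) VG.
have Hsum := @sumL_bound R r n.
have HB : #|B|%:R * T <= \sum_(v in Vset n) L v.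
  rewrite (big_setID G) /=.
  apply: (le_trans (y := \sum_(v in Vset n :\: G) L v)); last first.
    by rewrite lerDr; apply: sumr_ge0 => v _.
  rewrite mulrC mulr_natr -sumr_const; apply: ler_sum => v.
  rewrite !inE => /andP [H1 H2]; move: H1; rewrite H2 /= -leNgt; exact.
set b := (#|B|%:R : R).
have b0 : 0 <= b by [].
have Gb : (#|G|%:R : R) = K - b by rewrite /K -HGB natrD addrK.
rewrite Gb.
have Hb : b * (288 * ln (n%:R : R)) <= 6 * K.
  have : b * T <= 6 * K * P ^+ 2 by apply: le_trans HB Hsum.
  have PP : 0 < P ^+ 2 by rewrite exprn_gt0.
  have -> : b * T = (b * (288 * ln (n%:R : R))) * P ^+ 2 by rewrite /T; ring.
  by rewrite ler_pM2r.
have Hb2 : b * 48 * (eps * ln (n%:R : R)) <= eps * K.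
  have : eps * (b * (288 * ln (n%:R : R))) <= eps * (6 * K) by rewrite ler_pM2l.
  lra.
have el : 1 < eps * ln (n%:R : R).
  by have h := Ln; rewrite -(ltr_pM2l eps0) (mulfV (lt0r_neq0 eps0)) in h.
have Hb3 : b * 48 <= eps * K.
  apply: le_trans Hb2; rewrite -[X in X <= _]mulr1 ler_wpM2l //; first lra.
  lra.
have ek : 0 < eps * K by rewrite mulr_gt0.
have : b < eps * K by lra.
rewrite -ltr_pdivrMr // => hb.
rewrite mulrBl divff ?gt_eqF //; lra.
Qed.
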